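(* Let $\sigma$ be a ruled submanifold of degree $d$. Then at every regular point $p$ of $\sigma$ the first normal space satisfies $d-1 \le \dim N^{1}_{p}\sigma \le d+1$.
   Context: Ruled submanifold: given an open interval $I$, a smooth unit-speed curve $\gamma \colon I \to \mathbb{R}^{m+n}$ and smooth vector fields $X_{1},\dotsc,X_{m-1}$ along $\gamma$ that are orthonormal at each $t$, define $\sigma(t,u^{1},\dotsc,u^{m-1})=\gamma(t)+\sum_{j=1}^{m-1}u^{j}X_{j}(t)$ on $I\times\mathbb{R}^{m-1}$. A point is regular if $d\sigma$ is injective there. Degree: for a subbundle $\mathcal{E}$ of $T\mathbb{R}^{m+n}|_{\gamma}$, define $\rho_{t}\colon\mathcal{E}_{t}\to\mathcal{E}_{t}^{\perp}$ by $v\mapsto\pi^{\perp}(dV/dt(t))$. Here $V$ is any smooth local section of $\mathcal{E}$ with $V(t)=v$, and $\pi^{\perp}$ is orthogonal projection onto $\mathcal{E}_{t}^{\perp}$. The degree of $\mathcal{E}$ at $t$ is $\operatorname{rank}\rho_{t}$. The submanifold $\sigma$ is of degree $d$ if the ruling distribution $\mathcal{D}_{t}=\operatorname{Span}(X_{j}(t))_{j=1}^{m-1}$ has degree $d$ at every $t$. The first normal space $N^{1}_{p}\sigma$ at a regular point $p$ is the linear span of the image of the second fundamental form of $\sigma$ at $p$ (a subspace of the normal space). *)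

(* Defs.v *)
From HB Require Import structures.
From mathcomp Require Import all_boot all_order all_algebra.
From mathcomp Require Import all_classical all_reals all_analysis.
Set Implicit Arguments. Unset Strict Implicit. Unset Printing Implicit Defensive.
Import Order.TTheory GRing.Theory Num.Theory.
Import numFieldNormedType.Exports.
Local Open Scope classical_set_scope.
Local Open Scope ring_scope.

Section RuledDefs.
Variable R : realType.

Definition dotv (N : nat) (u v : 'rV[R]_N) : R := (u *m v^T) 0 0.

Definition open_itv (a b : \bar R) : set R :=
  [set t : R | (a < t%:E)%E /\ (t%:E < b)%E].

Definition smooth_on (N : nat) (I : set R) (f : R -> 'rV[R]_N) : Prop :=
  forall (k : nat) (t : R), I t -> derivable (iter k (@derive1 _ _) f) t 1.

(* Orthogonal projection onto the orthogonal complement of the row space of A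
   (the standard formula  v - v B^T (B B^T)^{-1} B  with B = row_base A). *)
Definition perp_proj (p N : nat) (A : 'M[R]_(p, N)) (v : 'rV[R]_N) : 'rV[R]_N :=
  let B := row_base A in v - v *m B^T *m invmx (B *m B^T) *m B.

Definition rulings (k N : nat) (X : 'I_k -> R -> 'rV[R]_N) (t : R) : 'M[R]_(k, N) :=
  \matrix_(j < k) X j t.

(* rho_t : D_t -> D_t^perp,  v = sum_j a_j X_j(t)  |->  pi^perp (d/dt sum_j a_j X_j)
   (section with constant coefficients); its image is spanned by the
   pi^perp(X_j'(t)), and the degree is the rank of rho_t. *)
Definition rho_image (k N : nat) (X : 'I_k -> R -> 'rV[R]_N) (t : R) : 'M[R]_(k, N) :=
  \matrix_(j < k) perp_proj (rulings X t) (derive1 (X j) t).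

Definition degree_at (k N : nat) (X : 'I_k -> R -> 'rV[R]_N) (t : R) : nat :=
  \rank (rho_image X t).

(* Ruled map sigma(t, u) = gamma(t) + sum_j u^j X_j(t); the parameter
   x : 'rV_(k.+1) has t = x 0 0 and u^j = x 0 (lift 0 j). *)
Definition ruled_map (k N : nat) (gamma : R -> 'rV[R]_N)
  (X : 'I_k -> R -> 'rV[R]_N) (x : 'rV[R]_k.+1) : 'rV[R]_N :=
  gamma (x 0 0) + \sum_(j < k) x 0 (lift 0 j) *: X j (x 0 0).

Definition ebasis (m : nat) (i : 'I_m) : 'rV[R]_m := delta_mx 0 i.

(* Jacobian of F at x: rows are the partial derivatives dF/dx_i; d F_x(a) = a *m J. *)
Definition jacobian (m N : nat) (F : 'rV[R]_m -> 'rV[R]_N) (x : 'rV[R]_m)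
  : 'M[R]_(m, N) := \matrix_(i < m) ('D_(ebasis i) F x).

Definition regular_point (m N : nat) (F : 'rV[R]_m -> 'rV[R]_N) (x : 'rV[R]_m) : Prop :=
  row_free (jacobian F x).

Definition sff_coef (m N : nat) (F : 'rV[R]_m -> 'rV[R]_N) (x : 'rV[R]_m)
  (i j : 'I_m) : 'rV[R]_N :=
  perp_proj (jacobian F x) ('D_(ebasis i) ('D_(ebasis j) F) x).

Definition sff (m N : nat) (F : 'rV[R]_m -> 'rV[R]_N) (x : 'rV[R]_m)
  (a b : 'rV[R]_m) : 'rV[R]_N :=
  \sum_(i < m) \sum_(j < m) (a 0 i * b 0 j) *: sff_coef F x i j.

(* First normal space: linear span of the image of the (bilinear) second
   fundamental form, i.e. the span of the II(e_i, e_j). *)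
Definition first_normal_space (m N : nat) (F : 'rV[R]_m -> 'rV[R]_N) (x : 'rV[R]_m)
  : 'M[R]_N :=
  (\sum_(i < m) \sum_(j < m) <<sff_coef F x i j>>)%MS.

End RuledDefs.

(* Main.v *)
Require Import Defs.
From HB Require Import structures.
From mathcomp Require Import all_boot all_order all_algebra.
From mathcomp Require Import all_classical all_reals all_analysis.
Import Order.TTheory GRing.Theory Num.Theory.
Import numFieldNormedType.Exports.
Local Open Scope classical_set_scope.
Local Open Scope ring_scope.
Set Implicit Arguments. Unset Strict Implicit.

Section LA.
Variable R : realType.

Lemma mul_tr_eq0 p N (M : 'M[R]_(p, N)) : M *m M^T = 0 -> M = 0.
Proof.
move=> H; apply/matrixP => i j; rewrite [RHS]mxE.
have : (M *m M^T) i i = 0 by rewrite H mxE.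
rewrite mxE => /psumr_eq0P H2.
have : M i j * M^T j i = 0 by apply: H2 => // l _; rewrite mxE -expr2 sqr_ge0.
by rewrite mxE -expr2 => /eqP; rewrite sqrf_eq0 => /eqP.
Qed.

Lemma BBt_unit p N (B : 'M[R]_(p, N)) : row_free B -> B *m B^T \in unitmx.
Proof.
move=> fB; rewrite -row_free_unit -kermx_eq0; apply/eqP.
set K := kermx _.
have H : K *m (B *m B^T) = 0 by apply/eqP; rewrite -sub_kermx.
have : (K *m B) *m (K *m B)^T = 0 by rewrite trmx_mul mulmxA -(mulmxA K) H mul0mx.
move=> /mul_tr_eq0 /eqP; rewrite mulmx_free_eq0 // => /eqP //.
Qed.

Definition PM p N (A : 'M[R]_(p, N)) : 'M[R]_N :=
  1%:M - (row_base A)^T *m invmx (row_base A *m (row_base A)^T) *m row_base A.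

Lemma perp_projE p N (A : 'M[R]_(p, N)) v : perp_proj A v = v *m PM A.
Proof. by rewrite /perp_proj /PM mulmxBr mulmx1 !mulmxA. Qed.

Lemma PM_kill p q N (A : 'M[R]_(p, N)) (U : 'M[R]_(q, N)) :
  (U <= A)%MS -> U *m PM A = 0.
Proof.
rewrite -(eq_row_base A) => /submxP [c ->].
have fB := row_base_free A; rewrite /PM; move: (row_base A) fB => B fB.
rewrite mulmxBr mulmx1 !mulmxA -(mulmxA c B B^T) -(mulmxA c (B *m B^T)).
by rewrite mulmxV ?BBt_unit // mulmx1 subrr.
Qed.

Lemma PM_orth p q N (A : 'M[R]_(p, N)) (U : 'M[R]_(q, N)) :
  U *m PM A *m A^T = 0.
Proof.
have /submxP [c Ac] : (A <= row_base A)%MS by rewrite eq_row_base.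
have -> : A^T = (row_base A)^T *m c^T by rewrite {1}Ac trmx_mul.
rewrite mulmxA.
suff -> : U *m PM A *m (row_base A)^T = 0 by rewrite mul0mx.
have fB := row_base_free A; rewrite /PM; move: (row_base A) fB => B fB.
rewrite -mulmxA mulmxBl mul1mx -!mulmxA.
by rewrite mulVmx ?BBt_unit // mulmx1 subrr mulmx0.
Qed.

Lemma PM_ker p N (A : 'M[R]_(p, N)) : (kermx (PM A) <= A)%MS.
Proof.
set K := kermx _.
have H : K *m PM A = 0 by apply/eqP; rewrite -sub_kermx.
move: H; rewrite /PM mulmxBr mulmx1 => /eqP; rewrite subr_eq0 => /eqP ->.
rewrite -(eq_row_base A) mulmxA; exact: submxMl.
Qed.

Lemma PM_sub p q N (A : 'M[R]_(p, N)) (U : 'M[R]_(q, N)) :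
  (U - U *m PM A <= A)%MS.
Proof.
rewrite /PM mulmxBr mulmx1 opprB addrC subrK -(eq_row_base A) mulmxA.
exact: submxMl.
Qed.

Lemma rank_bounds k N (D : 'M[R]_(k, N)) (T : 'M[R]_(k.+1, N)) (Wm : 'M[R]_(k, N))
  (v0 : 'rV[R]_N) (N1 : 'M[R]_N) :
  D *m D^T = 1%:M -> (D <= T)%MS ->
  (Wm *m PM T <= N1)%MS -> (N1 <= Wm *m PM T + v0)%MS ->
  ((\rank (Wm *m PM D)).-1 <= \rank N1 <= (\rank (Wm *m PM D)).+1)%N.
Proof.
move=> DD DT sub1 sub2.
set Rho := Wm *m PM D.
have eRT : Wm *m PM T = Rho *m PM T.
  have : (Wm - Rho) *m PM T = 0 by apply: PM_kill; apply: submx_trans (PM_sub _ _) DT.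
  by rewrite mulmxBl => /eqP; rewrite subr_eq0 => /eqP.
rewrite eRT in sub1 sub2.
set RT := Rho *m PM T in sub1 sub2.
have rD : \rank D = k.
  apply/eqP; rewrite eqn_leq rank_leq_row /=.
  by rewrite -{1}(mxrank1 R k) -DD mxrankM_maxl.
have rS : (\rank (Rho :&: T) <= 1)%N.
  set S := (Rho :&: T)%MS.
  have SD0 : (S :&: D)%MS = 0.
    set Z := (S :&: D)%MS.
    have /submxP [a Za] : (Z <= Rho)%MS by rewrite /Z /S (submx_trans (capmxSl _ _)) ?capmxSl.
    have /submxP [c Zc] : (Z <= D)%MS by rewrite capmxSr.
    apply: mul_tr_eq0.
    rewrite {2}Zc trmx_mul mulmxA.
    suff -> : Z *m D^T = 0 by rewrite mul0mx.
    by rewrite Za /Rho mulmxA PM_orth.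
  have := mxrank_disjoint_sum SD0.
  have : (\rank (S + D)%MS <= k.+1)%N.
    apply: leq_trans (rank_leq_row T).
    by apply: mxrankS; rewrite addsmx_sub capmxSr DT.
  by move=> H1 H2; rewrite H2 rD in H1; rewrite -(leq_add2r k) add1n.
have rK : (\rank (Rho :&: kermx (PM T)) <= 1)%N.
  apply: leq_trans rS; apply: mxrankS; apply: capmxS => //; exact: PM_ker.
have e := mxrank_mul_ker Rho (PM T).
have u1 : (\rank N1 <= (\rank Rho).+1)%N.
  apply: leq_trans (mxrankS sub2) _.
  apply: leq_trans (mxrank_adds_leqif _ _) _.
  apply: leq_trans (leq_add (mxrankM_maxl Rho (PM T)) (rank_leq_row v0)) _.
  by rewrite addn1.
have l1 : (\rank RT <= \rank N1)%N by exact: mxrankS.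
apply/andP; split => //.
rewrite -e /RT; apply: leq_trans _ l1.
move: rK; case: (\rank (Rho :&: _)) => [|[|n]] //= _.
  by rewrite addn0 leq_pred.
by rewrite addn1.
Qed.

End LA.
Section AN.
Variable R : realType.

Lemma lim_hinvh (V : normedModType R) (c : V) :
  lim ((fun h : R => h^-1 *: (h *: c)) @ 0^') = c.
Proof.
apply: lim_near_cst; first exact: norm_hausdorff.
near=> h; rewrite scalerA mulVf ?scale1r //.
near: h; exact: nbhs_dnbhs_neq.
Unshelve. all: by end_near. Qed.

Lemma ebasisE m (i : 'I_m) (h : R) (y : 'rV[R]_m) (l : 'I_m) :
  (h *: ebasis R i + y) 0 l = h * (l == i)%:R + y 0 l.
Proof. by rewrite !mxE eqxx. Qed.

Variables (k N : nat) (gamma : R -> 'rV[R]_N) (X : 'I_k -> R -> 'rV[R]_N).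
Let F := ruled_map gamma X.

Lemma D_lift (y : 'rV[R]_k.+1) j :
  derive F y (ebasis R (lift 0 j)) = X j (y 0 0).
Proof.
rewrite /derive.
have -> : (fun h : R => h^-1 *: ((F \o shift y) (h *: ebasis R (lift 0 j)) - F y))
   = fun h => h^-1 *: (h *: X j (y 0 0)).
  apply: funext => h /=; congr (_ *: _).
  rewrite /F /ruled_map ebasisE.
  have -> : ((0 : 'I_k.+1) == lift 0 j) = false by rewrite (negbTE (neq_lift _ _)).
  rewrite mulr0 add0r.
  under eq_bigr do rewrite ebasisE (inj_eq (@lift_inj _ 0)) scalerDl.
  rewrite big_split /= addrCA addrK (bigD1 j) //= eqxx mulr1 big1 ?addr0 //.
  by move=> l /negbTE ->; rewrite mulr0 scale0r.
exact: lim_hinvh.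
Qed.

Lemma ebasis0_lift (h : R) (y : 'rV[R]_k.+1) j :
  (h *: ebasis R (lift 0 j) + y) 0 0 = y 0 0.
Proof. by rewrite ebasisE (negbTE (neq_lift _ _)) mulr0 add0r. Qed.

Lemma ebasis0_0 (h : R) (y : 'rV[R]_k.+1) :
  (h *: ebasis R 0 + y) 0 0 = h + y 0 0.
Proof. by rewrite ebasisE eqxx mulr1. Qed.

Lemma ebasis0_l (h : R) (y : 'rV[R]_k.+1) l :
  (h *: ebasis R 0 + y) 0 (lift 0 l) = y 0 (lift 0 l).
Proof. by rewrite ebasisE eq_sym (negbTE (neq_lift _ _)) mulr0 add0r. Qed.

Lemma DF_lift j : (fun y => derive F y (ebasis R (lift 0 j))) = fun y => X j (y 0 0).
Proof. by apply: funext => y; rewrite D_lift. Qed.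

Lemma A3 (x : 'rV[R]_k.+1) j :
  derive (fun y => derive F y (ebasis R (lift 0 j))) x (ebasis R 0)
  = derive1 (X j) (x 0 0).
Proof.
rewrite DF_lift /derive /derive1.
suff -> : (fun h : R => h^-1 *: (((fun y : 'rV[R]_k.+1 => X j (y 0 0)) \o shift x)
     (h *: ebasis R 0) - X j (x 0 0))) = (fun h => h^-1 *: (X j (h + x 0 0) - X j (x 0 0))) by [].
by apply: funext => h /=; rewrite ebasis0_0.
Qed.

Lemma A5 (x : 'rV[R]_k.+1) i j :
  derive (fun y => derive F y (ebasis R (lift 0 j))) x (ebasis R (lift 0 i)) = 0.
Proof.
rewrite DF_lift /derive.
have -> : (fun h : R => h^-1 *: (((fun y : 'rV[R]_k.+1 => X j (y 0 0)) \o shift x)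
     (h *: ebasis R (lift 0 i)) - X j (x 0 0))) = fun _ => 0.
  by apply: funext => h /=; rewrite ebasis0_lift subrr scaler0.
apply: lim_cst; exact: norm_hausdorff.
Qed.

Lemma quot_cvg (f : R -> 'rV[R]_N) t : derivable f t 1 ->
  (fun h => h^-1 *: (f (h + t) - f t)) @ 0^' --> derive1 f t.
Proof.
move=> Hd.
have E : (fun h : R => h^-1 *: (f (h + t) - f t)) =
         (fun h => h^-1 *: ((f \o shift t) (h *: 1) - f t)).
  by apply: funext => h /=; rewrite /GRing.scale /= mulr1.
by rewrite /derive1 E; exact: Hd.
Qed.

Lemma A2 (y : 'rV[R]_k.+1) :
  derivable gamma (y 0 0) 1 -> (forall l, derivable (X l) (y 0 0) 1) ->
  derive F y (ebasis R 0) =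
  derive1 gamma (y 0 0) + \sum_(l < k) y 0 (lift 0 l) *: derive1 (X l) (y 0 0).
Proof.
move=> dg dX; set t := y 0 0.
rewrite /derive.
have -> : (fun h : R => h^-1 *: ((F \o shift y) (h *: ebasis R 0) - F y)) =
  fun h => h^-1 *: (gamma (h + t) - gamma t) +
     \sum_(l < k) y 0 (lift 0 l) *: (h^-1 *: (X l (h + t) - X l t)).
  apply: funext => h /=; rewrite /F /ruled_map ebasis0_0.
  rewrite (eq_bigr (fun l => y 0 (lift 0 l) *: X l (h + t))); last first.
    by move=> l _; rewrite ebasis0_l.
  rewrite opprD addrACA -sumrB scalerDr scaler_sumr; congr (_ + _).
  by apply: eq_bigr => l _; rewrite -scalerBr !scalerA mulrC.
apply: cvg_lim; first exact: norm_hausdorff.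
apply: cvgD; first exact: quot_cvg.
apply: cvg_big; first exact: add_continuous.
move=> l _; apply: cvgZ; first exact: cvg_cst.
exact: quot_cvg.
Qed.

Lemma A4 (x : 'rV[R]_k.+1) j :
  derivable gamma (x 0 0) 1 -> (forall l, derivable (X l) (x 0 0) 1) ->
  derive (fun y => derive F y (ebasis R 0)) x (ebasis R (lift 0 j))
  = derive1 (X j) (x 0 0).
Proof.
move=> dg dX; rewrite /derive.
have -> : (fun h : R => h^-1 *: (((fun y => derive F y (ebasis R 0)) \o shift x)
     (h *: ebasis R (lift 0 j)) - derive F x (ebasis R 0))) =
   fun h => h^-1 *: (h *: derive1 (X j) (x 0 0)).
  apply: funext => h /=; congr (_ *: _).
  rewrite !A2 ?ebasis0_lift //.
  rewrite opprD addrACA subrr add0r -sumrB.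
  under eq_bigr do rewrite -scalerBl ebasisE (inj_eq (@lift_inj _ 0)) addrK.
  rewrite (bigD1 j) //= eqxx mulr1 big1 ?addr0 //.
  by move=> l /negbTE ->; rewrite mulr0 scale0r.
exact: lim_hinvh.
Qed.

End AN.

(* m = k.+1 (so m - 1 = k rulings), ambient dimension m + n. *)
Theorem mainTheorem3 (R : realType) (k n : nat) (a b : \bar R)
  (gamma : R -> 'rV[R]_(k.+1 + n)) (X : 'I_k -> R -> 'rV[R]_(k.+1 + n)) (d : nat) :
  (a < b)%E ->
  smooth_on (open_itv a b) gamma ->
  (forall t, open_itv a b t -> dotv (derive1 gamma t) (derive1 gamma t) = 1) ->
  (forall j, smooth_on (open_itv a b) (X j)) ->
  (forall t, open_itv a b t -> forall i j, dotv (X i t) (X j t) = (i == j)%:R) ->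
  (forall t, open_itv a b t -> degree_at X t = d) ->
  forall x : 'rV[R]_k.+1, open_itv a b (x 0 0) ->
  regular_point (ruled_map gamma X) x ->
  (d.-1 <= \rank (first_normal_space (ruled_map gamma X) x) <= d.+1)%N.
Proof.
move=> ab sg ug sX orth deg x xI reg.
have dg : derivable gamma (x 0 0) 1 := sg 0%N (x 0 0) xI.
have dX : forall l, derivable (X l) (x 0 0) 1 := fun l => sX l 0%N (x 0 0) xI.
set t := x 0 0 in dg dX xI *.
set F := ruled_map gamma X.
set T := Defs.jacobian F x.
set D := rulings X t.
set Wm := \matrix_(j < k) derive1 (X j) t.
have DD : D *m D^T = 1%:M.
  apply/matrixP => i j; rewrite mxE [RHS]mxE -(orth t xI i j) /dotv mxE.
  by apply: eq_bigr => l _; rewrite !mxE.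
have DT : (D <= T)%MS.
  apply/row_subP => j; rewrite /D /rulings rowK.
  have -> : X j t = row (lift 0 j) T by rewrite /T /Defs.jacobian rowK D_lift.
  exact: row_sub.
have Erho : rho_image X t = Wm *m PM D.
  by apply/row_matrixP => j; rewrite row_mul !rowK perp_projE.
have ESff : forall i j, sff_coef F x i j =
    derive (fun y => derive F y (ebasis R j)) x (ebasis R i) *m PM T.
  by move=> i j; rewrite /sff_coef perp_projE.
have sub1 : (Wm *m PM T <= first_normal_space F x)%MS.
  apply/row_subP => j; rewrite row_mul rowK.
  have -> : derive1 (X j) t *m PM T = sff_coef F x 0 (lift 0 j) by rewrite ESff A3.
  apply: (sumsmx_sup 0) => //; apply: (sumsmx_sup (lift 0 j)) => //.
  by rewrite genmxE.
have sub2 : (first_normal_space F x <= Wm *m PM T + sff_coef F x 0 0)%MS.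
  apply/sumsmx_subP => i _; apply/sumsmx_subP => j _; rewrite genmxE.
  case: (unliftP 0 i) => [i'|] ->; case: (unliftP 0 j) => [j'|] ->.
  - by rewrite ESff A5 mul0mx sub0mx.
  - apply: submx_trans (addsmxSl _ _).
    have -> : sff_coef F x (lift 0 i') 0 = row i' (Wm *m PM T)
      by rewrite ESff A4 // row_mul rowK.
    exact: row_sub.
  - apply: submx_trans (addsmxSl _ _).
    have -> : sff_coef F x 0 (lift 0 j') = row j' (Wm *m PM T)
      by rewrite ESff A3 row_mul rowK.
    exact: row_sub.
  - exact: addsmxSr.
rewrite -(deg t xI) /degree_at Erho.
exact: rank_bounds DD DT sub1 sub2.
Qed.
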